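(* For $0\le k\le n$, $2^kS_D(n,k)=\#D_{\subseteq}([n],k)$.
   Context: Let $\langle n\rangle=\{-n,\dots,-1,0,1,\dots,n\}$, $\overline{x}=-x$, and $\overline{T}=\{\overline{t}:t\in T\}$. An ordered signed partition of $\langle n\rangle$ with $2k+1$ blocks is a sequence $(T_0,T_1,\dots,T_{2k})$ of pairwise disjoint nonempty subsets whose union is $\langle n\rangle$, with $0\in T_0$, $T_0=\overline{T_0}$, and $T_{2i}=\overline{T_{2i-1}}$ for $i\in[k]$; the underlying set $\{T_0,\dots,T_{2k}\}$ is a signed partition. A signed partition is of type D if $\#T_0\neq3$. $S_D(n,k)$ is the number of type D signed partitions of $\langle n\rangle$ with $2k+1$ blocks. For $S\subset\mathbb{Z}\setminus\{0\}$, a standard signed partition (SSP) of $S$ with $k$ blocks is a sequence $(S_1,\dots,S_k)$ of disjoint nonempty subsets of $S\cup\overline{S}$ such that $\{S_1,\dots,S_k,\overline{S_1},\dots,\overline{S_k}\}$ is a partition of $S\cup\overline{S}$ into $2k$ blocks and $\min|S_1|\le\dots\le\min|S_k|$, where $|S_i|=\{|j|:j\in S_i\}$. A partial standard signed partition (PSSP) of $S$ is an SSP of a subset of $S$ (possibly empty). $B(S,k)$ (resp. $B_{\subseteq}(S,k)$) is the set of SSPs (resp. PSSPs) of $S$ with $k$ blocks, and $D_{\subseteq}([n],k)=B_{\subseteq}([n],k)\setminus\bigcup_{i=1}^nB([n]\setminus\{i\},k)$. *)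

(* Defs.v *)
From mathcomp Require Import all_boot all_order all_algebra zify.
Unset Strict Implicit. Unset Printing Implicit Defensive.
Import Order.TTheory GRing.Theory Num.Theory.

(* Encoding of <n> = {-n,...,n}: the element i : 'I_(2n+1) represents the
   integer i - n.  Hence 0 is represented by n, and x |-> -x is rev_ord. *)
Definition elt (n : nat) := 'I_(n.*2.+1).

Definition ival {n} (x : elt n) : int := (x : nat)%:Z - n%:Z.

Definition zero (n : nat) : elt n := inord n.

Definition neg {n} (x : elt n) : elt n := rev_ord x.

Definition negS {n} (A : {set elt n}) : {set elt n} := neg @: A.

Definition absn {n} (x : elt n) : nat := `|ival x|%N.

Lemma ival_neg n (x : elt n) : ival (neg x) = (- ival x)%R.
Proof. rewrite /ival /neg /=; have := ltn_ord x; move: (x : nat) => m; rewrite -addnn; lia. Qed.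

Lemma ival_zero n : ival (zero n) = 0%R.
Proof. rewrite /ival /zero inordK; [exact: subrr | rewrite -addnn; lia]. Qed.

Lemma ival_inj n : injective (@ival n).
Proof. move=> x y; rewrite /ival => h; apply: val_inj => /=; lia. Qed.

Definition ordered_signed_partition n k
    (T : {ffun 'I_(k.*2.+1) -> {set elt n}}) : bool :=
  [forall i, forall j, (i != j) ==> [disjoint T i & T j]] &&
  [forall i, T i != set0] &&
  (\bigcup_i T i == [set: elt n]) &&
  (zero n \in T ord0) && (T ord0 == negS (T ord0)) &&
  (* T_{2i} = \overline{T_{2i-1}} for i in [k] (written with i-1 : 'I_k) *)
  [forall i : 'I_k, T (inord (i.*2.+2)) == negS (T (inord (i.*2.+1)))].

Definition typeD_signed_partition n k (P : {set {set elt n}}) : bool :=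
  [exists T : {ffun 'I_(k.*2.+1) -> {set elt n}},
     [&& ordered_signed_partition n k T,
         P == [set T i | i : 'I_(k.*2.+1)] &
         #|T ord0| != 3]].

Definition S_D (n k : nat) : nat := #|[set P | typeD_signed_partition n k P]|.

Definition posn n : {set elt n} := [set x | (0 < ival x)%R].

Definition minabs {n} (A : {set elt n}) : nat := \big[minn/n]_(x in A) absn x.

Definition SSP n k (S : {set elt n}) (f : {ffun 'I_k -> {set elt n}}) : bool :=
  let D := S :|: negS S in
  let P := [set f i | i : 'I_k] :|: [set negS (f i) | i : 'I_k] in
  [&& [forall i, (f i \subset D) && (f i != set0)],
      [forall i, forall j, (i != j) ==> [disjoint f i & f j]],
      partition P D, #|P| == k.*2 &
      [forall i : 'I_k, forall j : 'I_k,
          ((i : nat) <= j) ==> (minabs (f i) <= minabs (f j))]].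

Definition B n k (S : {set elt n}) : {set {ffun 'I_k -> {set elt n}}} :=
  [set f | SSP n k S f].

Definition B_sub n k : {set {ffun 'I_k -> {set elt n}}} :=
  [set f | [exists S : {set elt n}, (S \subset posn n) && (f \in B n k S)]].

Definition D_sub n k : {set {ffun 'I_k -> {set elt n}}} :=
  B_sub n k :\: \bigcup_(i in posn n) B n k (posn n :\ i).

(* Main.v *)
Require Import Defs.
From mathcomp Require Import all_boot all_order all_algebra zify.
Import Order.TTheory GRing.Theory Num.Theory.
Set Implicit Arguments. Unset Strict Implicit.


Lemma negK n : involutive (@neg n).
Proof. exact: rev_ordK. Qed.

Lemma neg_inj n : injective (@neg n).
Proof. exact: inv_inj (@negK n). Qed.

Lemma neg_val n (x : elt n) : (neg x : nat) = n + n - x.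
Proof. by rewrite /neg /= subSS addnn. Qed.

Lemma elt_le n (x : elt n) : (x : nat) <= n + n.
Proof. by rewrite addnn -ltnS. Qed.

Lemma ival_gt0 n (x : elt n) : (0 < ival x)%R = (n < x).
Proof. rewrite /ival; lia. Qed.

Lemma absnE n (x : elt n) : absn x = if n <= x then x - n else n - x.
Proof. rewrite /absn /ival. case: leqP => h; lia. Qed.

Lemma zero_val n : (zero n : nat) = n.
Proof. by rewrite /zero inordK // -addnn; lia. Qed.

Lemma eq_zero n (x : elt n) : (x == zero n) = ((x : nat) == n).
Proof. by rewrite -val_eqE /= zero_val. Qed.

Lemma mem_negS n (A : {set elt n}) x : (x \in negS A) = (neg x \in A).
Proof.
apply/imsetP/idP => [[y yA ->]|h]; first by rewrite negK.
by exists (neg x); rewrite ?negK.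
Qed.

Lemma negSK n : involutive (@negS n).
Proof. by move=> A; apply/setP => x; rewrite !mem_negS negK. Qed.

Lemma negS_inj n : injective (@negS n).
Proof. exact: inv_inj (@negSK n). Qed.

Lemma card_negS n (A : {set elt n}) : #|negS A| = #|A|.
Proof. by rewrite /negS card_imset //; apply: neg_inj. Qed.

Lemma absn_neg n (x : elt n) : absn (neg x) = absn x.
Proof.
have := @elt_le n x; rewrite !absnE neg_val.
case: (leqP n (n + n - x)) => h1; case: (leqP n x) => h2 h3; lia.
Qed.

Lemma absn_le n (x : elt n) : absn x <= n.
Proof. have := @elt_le n x; rewrite absnE; case: (leqP n x); lia. Qed.

Lemma absn_eq n (x y : elt n) : absn x = absn y -> y = x \/ y = neg x.
Proof.
have := @elt_le n x; have := @elt_le n y; rewrite !absnE => hy hx.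
case: (leqP n x) => h1; case: (leqP n y) => h2 e.
- by left; apply: ord_inj; lia.
- by right; apply: ord_inj; rewrite neg_val; lia.
- by right; apply: ord_inj; rewrite neg_val; lia.
- by left; apply: ord_inj; lia.
Qed.

Lemma neg_zero n : neg (zero n) = zero n.
Proof. by apply: ord_inj; rewrite neg_val zero_val addnK. Qed.

Lemma minabs_le n (A : {set elt n}) x : x \in A -> minabs A <= absn x.
Proof.
move=> xA; rewrite /minabs; have : x \in index_enum (elt n) by rewrite mem_index_enum.
elim: (index_enum _) => [//|y s IH].
rewrite inE big_cons; case/orP => [/eqP <-|/IH h]; first by rewrite xA geq_minl.
case: (y \in A) => //; exact: leq_trans (geq_minr _ _) h.
Qed.

Lemma minabs_ex n (A : {set elt n}) : A != set0 ->
  exists2 x, x \in A & absn x = minabs A.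
Proof.
case/set0Pn => x0 x0A.
have : minabs A = n \/ exists2 x, x \in A & absn x = minabs A.
  rewrite /minabs; set m := \big[minn/n]_(x in A) absn x.
  have : m = n \/ exists2 x, x \in A & absn x = m.
    rewrite /m; apply: (big_ind (fun m => m = n \/ exists2 x, x \in A & absn x = m)).
    - by left.
    - move=> a b ha hb; rewrite /minn; case: ltnP => _; [exact: ha | exact: hb].
    - by move=> x xA; right; exists x.
  by [].
case=> [e|h]; last exact: h. exists x0 => //; apply/eqP; rewrite eqn_leq minabs_le // e absn_le. by [].
Qed.

Lemma minabs_negS_le n (A : {set elt n}) : A != set0 -> minabs (negS A) <= minabs A.
Proof.
case/minabs_ex => x xA <-; rewrite -absn_neg; apply: minabs_le.
by rewrite mem_negS negK.
Qed.

Lemma negS0 n (A : {set elt n}) : (negS A == set0) = (A == set0).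
Proof. by rewrite -!cards_eq0 card_negS. Qed.

Lemma minabs_negS n (A : {set elt n}) : minabs (negS A) = minabs A.
Proof.
have [->|A0] := eqVneq A set0; first by rewrite /negS imset0.
apply/eqP; rewrite eqn_leq minabs_negS_le //=.
by have := @minabs_negS_le n (negS A); rewrite negSK negS0; apply.
Qed.


Definition Fb {n k} (f : 'I_k -> {set elt n}) (p : 'I_k * bool) : {set elt n} :=
  if p.2 then f p.1 else negS (f p.1).
Definition Pf {n k} (f : 'I_k -> {set elt n}) := [set Fb f p | p : 'I_k * bool].
Definition cov {n k} (f : 'I_k -> {set elt n}) := cover (Pf f).
Definition good {n k} (f : 'I_k -> {set elt n}) :=
  [/\ forall p, Fb f p != set0,
      forall p q, p != q -> [disjoint Fb f p & Fb f q] &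
      forall p, zero n \notin Fb f p].
Definition sortedm {n k} (f : 'I_k -> {set elt n}) :=
  forall i j : 'I_k, i <= j -> minabs (f i) <= minabs (f j).

Lemma Pf_eq n k (f : 'I_k -> {set elt n}) :
  [set f i | i : 'I_k] :|: [set negS (f i) | i : 'I_k] = Pf f.
Proof.
apply/setP => X; rewrite inE; apply/orP/imsetP.
- case=> /imsetP [i _ ->]; [by exists (i, true) | by exists (i, false)].
- case=> [[i []] _ ->]; rewrite /Fb /=; [left | right]; exact: imset_f.
Qed.

Lemma mem_cov n k (f : 'I_k -> {set elt n}) x :
  reflect (exists p, x \in Fb f p) (x \in cov f).
Proof.
apply: (iffP bigcupP) => [[X /imsetP [p _ ->] xX]|[p xp]]; first by exists p.
by exists (Fb f p) => //; apply: imset_f.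
Qed.

Lemma Fb_neg n k (f : 'I_k -> {set elt n}) i b x :
  (neg x \in Fb f (i, b)) = (x \in Fb f (i, ~~ b)).
Proof. by case: b; rewrite /Fb /= mem_negS ?negK. Qed.

Lemma cov_neg n k (f : 'I_k -> {set elt n}) x : (neg x \in cov f) = (x \in cov f).
Proof.
apply/mem_cov/mem_cov => [[[i b]]|[[i b]]].
- by rewrite Fb_neg => h; exists (i, ~~ b).
- by move=> h; exists (i, ~~ b); rewrite Fb_neg negbK.
Qed.

Lemma negS_cov n k (f : 'I_k -> {set elt n}) : negS (cov f) = cov f.
Proof. by apply/setP => x; rewrite mem_negS cov_neg. Qed.

Lemma good_zero n k (f : 'I_k -> {set elt n}) : good f -> zero n \notin cov f.
Proof. by case=> _ _ hz; apply/mem_cov => [[p]]; apply/negP. Qed.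

Lemma good_inj n k (f : 'I_k -> {set elt n}) : good f -> injective (Fb f).
Proof.
case=> hne hd _ p q e; apply/eqP; apply: contraT => /hd.
by rewrite e -setI_eq0 setIid (negPf (hne q)).
Qed.

Lemma card_Pf n k (f : 'I_k -> {set elt n}) : good f -> #|Pf f| = k.*2.
Proof.
move=> g; rewrite /Pf card_imset; last exact: good_inj.
by rewrite card_prod card_ord card_bool muln2.
Qed.

Lemma minabs_inj n k (f : 'I_k -> {set elt n}) i j : good f ->
  minabs (f i) = minabs (f j) -> i = j.
Proof.
case=> hne hd _ e.
have [x xi ex] := minabs_ex (hne (i, true)).
have [y yj ey] := minabs_ex (hne (j, true)).
rewrite /Fb /= in xi yj ex ey.
case: (absn_eq (etrans ex (etrans e (esym ey)))) => exy; rewrite exy in yj.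
- apply/eqP; apply: contraT => hij.
  have := hd (i, true) (j, true); rewrite xpair_eqE (negPf hij) /= => /(_ isT).
  by move/disjointFr; rewrite /Fb /= => /(_ _ xi); rewrite yj.
- have := hd (i, false) (j, true); rewrite xpair_eqE andbF => /(_ isT).
  move/disjointFr; rewrite /Fb /= => /(_ (neg x)); rewrite mem_negS negK => /(_ xi); by rewrite yj.
Qed.

Lemma sorted_strict n k (f : 'I_k -> {set elt n}) : good f -> sortedm f ->
  forall i j : 'I_k, i < j -> minabs (f i) < minabs (f j).
Proof.
move=> g s i j ij; rewrite ltn_neqAle s ?(ltnW ij) // andbT.
apply/eqP => /(minabs_inj g) e; by rewrite e ltnn in ij.
Qed.


Lemma mem_posn n (x : elt n) : (x \in posn n) = (n < x).
Proof. by rewrite inE ival_gt0. Qed.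

Lemma zero_posn n : zero n \notin posn n.
Proof. by rewrite mem_posn zero_val ltnn. Qed.

Lemma mem_Pf n k (f : 'I_k -> {set elt n}) p : Fb f p \in Pf f.
Proof. exact: imset_f. Qed.

Lemma sub_cov n k (f : 'I_k -> {set elt n}) p : Fb f p \subset cov f.
Proof. by apply/subsetP => x xp; apply/mem_cov; exists p. Qed.

Lemma cov_posn n (S : {set elt n}) : S \subset posn n ->
  (S :|: negS S) :&: posn n = S.
Proof.
move=> /subsetP sS; apply/setP => x; rewrite in_setI in_setU mem_negS.
case xS: (x \in S) => /=; first by rewrite sS.
case nS: (neg x \in S) => //=; move: (sS _ nS); rewrite !mem_posn neg_val.
have := elt_le x; lia.
Qed.

Lemma cov_split n k (f : 'I_k -> {set elt n}) : good f ->
  (cov f :&: posn n) :|: negS (cov f :&: posn n) = cov f.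
Proof.
move=> /good_zero hz; apply/setP => x; rewrite in_setU mem_negS !in_setI cov_neg !mem_posn neg_val.
case xC: (x \in cov f) => //=.
have : (x : nat) != n by apply: contraNneq hz => e; have -> : zero n = x by apply: ord_inj; rewrite zero_val e.
have := elt_le x; lia.
Qed.

Lemma SSP_good n k (S : {set elt n}) (f : {ffun 'I_k -> {set elt n}}) : S \subset posn n -> SSP n k S f ->
  [/\ good f, sortedm f & cov f = S :|: negS S].
Proof.
move=> sS; rewrite /SSP /= Pf_eq => /and5P [/forallP h1 /forallP h2 hpart hcard /forallP h5].
case/and3P: hpart => /eqP hcov /trivIsetP htriv h0.
have hinj : injective (Fb f).
  have hi : {in [set: 'I_k * bool] &, injective (Fb f)}.
    apply/imset_injP; rewrite cardsT card_prod card_ord card_bool muln2.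
    suff -> : [set Fb f x | x in [set: 'I_k * bool]] = Pf f by [].
    by apply/setP => X; apply/imsetP/imsetP => [[p _ ->]|[p _ ->]]; exists p.
  by move=> p q e; apply: hi; rewrite ?inE.
have hne : forall p, Fb f p != set0.
  by move=> [i []]; rewrite /Fb /= ?negS0; case/andP: (h1 i).
split.
- split => //.
  + move=> p q pq; apply: htriv; rewrite ?mem_Pf //.
    by apply: contra pq => /eqP /hinj ->.
  + move=> p; have := sub_cov f p; rewrite /cov hcov => /subsetP s.
    apply/negP => /s; rewrite inE mem_negS neg_zero.
    by case/orP => /(subsetP sS); rewrite (negPf (zero_posn n)).
- by move=> i j; move/forallP: (h5 i) => /(_ j) /implyP.
- exact: hcov.
Qed.

Lemma good_SSP n k (f : {ffun 'I_k -> {set elt n}}) : good f -> sortedm f ->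
  SSP n k (cov f :&: posn n) f.
Proof.
move=> g hs; have [hne hd hz] := g.
rewrite /SSP /= cov_split // Pf_eq.
apply/and5P; split.
- apply/forallP => i; apply/andP; split; first exact: (sub_cov f (i, true)).
  exact: (hne (i, true)).
- apply/forallP => i; apply/forallP => j; apply/implyP => ij.
  by apply: (hd (i, true) (j, true)); rewrite xpair_eqE (negPf ij).
- apply/and3P; split => //.
  + apply/trivIsetP => A B /imsetP [p _ ->] /imsetP [q _ ->] pq.
    by apply: hd; apply: contra pq => /eqP ->.
  + by apply/imsetP => [[p _ e]]; move: (hne p); rewrite -e eqxx.
- by rewrite card_Pf.
- by apply/forallP => i; apply/forallP => j; apply/implyP => /hs.
Qed.

Lemma posnD1 n (C : {set elt n}) i : i \in posn n ->
  (C :&: posn n == posn n :\ i) = (posn n :\: C == [set i]).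
Proof.
move=> ip; apply/eqP/eqP => e; apply/setP => x.
- have := congr1 (fun A : {set elt n} => x \in A) e; rewrite /= ?(in_setI, in_setD, in_setD1, in_set1).
  case: (eqVneq x i) => [->|_]; rewrite ?ip /=; case: (_ \in C); case: (_ \in posn n) => //.
- have := congr1 (fun A : {set elt n} => x \in A) e; rewrite /= ?(in_setI, in_setD, in_setD1, in_set1).
  case: (eqVneq x i) => [->|_]; rewrite ?ip /=; case: (_ \in C); case: (_ \in posn n) => //.
Qed.

Lemma D_subP n k (f : {ffun 'I_k -> {set elt n}}) :
  f \in D_sub n k <-> [/\ good f, sortedm f & #|posn n :\: cov f| != 1].
Proof.
split.
- rewrite inE => /andP [hn]; rewrite inE => /existsP [S /andP [sS]].
  rewrite inE => hS; have [g hs hc] := SSP_good sS hS.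
  split => //; apply/negP => /cards1P [i ei].
  have ip : i \in posn n by have := set11 i; rewrite -ei inE => /andP [].
  move/bigcupP: hn; apply; exists i => //.
  rewrite inE; have := good_SSP g hs.
  by move/eqP: ei; rewrite -posnD1 // => /eqP ->.
- case=> g hs hc; rewrite inE; apply/andP; split.
  + apply/bigcupP => [[i ip]]; rewrite inE => hS.
    have [_ _ e] := SSP_good (subsetDl _ _) hS.
    have : cov f :&: posn n == posn n :\ i by rewrite e cov_posn ?subsetDl.
    by rewrite posnD1 // => /eqP e2; move: hc; rewrite e2 cards1.
  + rewrite inE; apply/existsP; exists (cov f :&: posn n).
    by rewrite subsetIr inE good_SSP.
Qed.


Definition enc k (p : 'I_k * bool) : 'I_(k.*2.+1) :=
  inord (if p.2 then p.1.*2.+1 else p.1.*2.+2).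

Lemma enc_val k (p : 'I_k * bool) :
  (enc p : nat) = if p.2 then p.1.*2.+1 else p.1.*2.+2.
Proof.
rewrite /enc inordK //; have := ltn_ord p.1; case: p.2; rewrite -!addnn; lia.
Qed.

Lemma enc_inj k : injective (@enc k).
Proof.
move=> [i b] [j c] /(congr1 val) /=; rewrite !enc_val /= -!addnn.
case: b; case: c => e; try (exfalso; lia);
by rewrite (_ : i = j) //; apply: ord_inj; lia.
Qed.

Lemma enc_neq0 k (p : 'I_k * bool) : (enc p : nat) != 0.
Proof. by rewrite enc_val; case: p.2. Qed.

Lemma enc_surj k (j : 'I_(k.*2.+1)) : (j : nat) != 0 -> exists p, j = enc p.
Proof.
move=> j0; have := ltn_ord j; move: j0.
have := odd_double_half (j : nat).-1.
case: j => m mi /=; set q := m.-1./2; set b := odd m.-1 => e m0 mk.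
have qk : q < k by move: e mk; rewrite -!addnn; case: b => /=; lia.
exists (Ordinal qk, ~~ b); apply: ord_inj; rewrite enc_val /=.
by move: e m0; rewrite -!addnn; case: b => /=; lia.
Qed.

Lemma card_sym n (A : {set elt n}) : negS A = A -> zero n \in A ->
  #|A| = (#|A :&: posn n|).*2.+1.
Proof.
move=> hs hz.
have hA : forall x, (neg x \in A) = (x \in A) by move=> x; rewrite -mem_negS hs.
have e : A :\: posn n = zero n |: negS (A :&: posn n).
  apply/setP => x; rewrite in_setD in_setU1 mem_negS in_setI !mem_posn neg_val eq_zero hA.
  case: (eqVneq (x : nat) n) => ex.
    have -> : x = zero n by apply: ord_inj; rewrite zero_val.
    by rewrite hz zero_val ltnn.
  have := elt_le x; case: (x \in A) => //=; lia.
rewrite -(cardsID (posn n) A) e cardsU1 card_negS mem_negS neg_zero in_setI mem_posn zero_val ltnn andbF.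
by rewrite /= add1n addnS addnn.
Qed.


Definition blocks {n k} (f : 'I_k -> {set elt n}) := (~: cov f) |: Pf f.

Lemma T0_card n k (f : 'I_k -> {set elt n}) : good f ->
  #|~: cov f| = (#|posn n :\: cov f|).*2.+1.
Proof.
move=> g; rewrite card_sym.
- by rewrite setIC -setDE.
- by apply/setP => x; rewrite mem_negS !in_setC cov_neg.
- by rewrite in_setC good_zero.
Qed.

Lemma ord_cases k (j : 'I_(k.*2.+1)) : j = ord0 \/ exists p, j = enc p.
Proof.
case: (eqVneq (j : nat) 0) => h; last by right; apply: enc_surj.
by left; apply: ord_inj.
Qed.

Lemma enc_ord0 k (p : 'I_k * bool) : (enc p == ord0) = false.
Proof. by apply/negP => /eqP /(congr1 val) /= /eqP; rewrite (negPf (enc_neq0 p)). Qed.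

Lemma enc_half k (p : 'I_k * bool) : ((enc p : nat).-1)./2 = p.1.
Proof. by rewrite enc_val; case: p.2 => /=; rewrite ?uphalf_double ?doubleK. Qed.

Lemma enc_odd k (p : 'I_k * bool) : odd (enc p) = p.2.
Proof. by rewrite enc_val; case: p.2 => /=; rewrite odd_double. Qed.

Definition mkT {n k} (f : 'I_k -> {set elt n}) : {ffun 'I_(k.*2.+1) -> {set elt n}} :=
  [ffun j : 'I_(k.*2.+1) => if (j : nat) == 0 then ~: cov f
     else oapp (fun i : 'I_k => Fb f (i, odd j)) set0 (insub (j : nat).-1./2)].

Lemma mkT0 n k (f : 'I_k -> {set elt n}) : mkT f ord0 = ~: cov f.
Proof. by rewrite ffunE. Qed.

Lemma mkTE n k (f : 'I_k -> {set elt n}) p : mkT f (enc p) = Fb f p.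
Proof.
rewrite ffunE (negPf (enc_neq0 p)) enc_odd.
case: insubP => [i _ ei|]; last by rewrite enc_half ltn_ord.
by case: p ei => [i' b] /=; rewrite enc_half => e; rewrite (_ : i = i') //; apply: ord_inj.
Qed.

Lemma SD_blocks n k (f : 'I_k -> {set elt n}) : good f -> #|posn n :\: cov f| != 1 ->
  typeD_signed_partition n k (blocks f).
Proof.
move=> g hc; have [hne hd hz] := g.
apply/existsP; exists (mkT f); apply/and3P; split.
- apply/andP; split; last first.
    apply/forallP => i; change (mkT f (enc (i, false)) == negS (mkT f (enc (i, true)))).
    by rewrite !mkTE.
  apply/andP; split; last by rewrite mkT0; apply/eqP/setP => x; rewrite mem_negS !in_setC cov_neg.
  apply/andP; split; last by rewrite mkT0 in_setC good_zero.
  apply/andP; split.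
    apply/andP; split.
      apply/forallP => i; apply/forallP => j; apply/implyP => ij.
      case: (ord_cases i) => [ei|[p ep]]; case: (ord_cases j) => [ej|[q eq]]; subst.
      + by rewrite eqxx in ij.
      + by rewrite mkT0 mkTE disjoint_sym disjoints_subset setCK sub_cov.
      + by rewrite mkT0 mkTE disjoints_subset setCK sub_cov.
      + by rewrite !mkTE; apply: hd; apply: contra ij => /eqP ->.
    apply/forallP => j; case: (ord_cases j) => [->|[p ->]]; last by rewrite mkTE.
    by rewrite mkT0; apply/set0Pn; exists (zero n); rewrite in_setC good_zero.
  apply/eqP/setP => x; rewrite inE; apply/bigcupP.
  case xc: (x \in cov f).
    by case/mem_cov: xc => p xp; exists (enc p) => //; rewrite mkTE.
  by exists ord0 => //; rewrite mkT0 in_setC xc.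
- apply/eqP/setP => X; apply/setU1P/imsetP.
  + case=> [->|/imsetP [p _ ->]]; first by exists ord0; rewrite ?mkT0.
    by exists (enc p); rewrite ?mkTE.
  + case=> j _ ->; case: (ord_cases j) => [->|[p ->]]; first by left; rewrite mkT0.
    by right; rewrite mkTE mem_Pf.
- by rewrite mkT0 T0_card //; move: hc; lia.
Qed.


Lemma SD_inv n k (P : {set {set elt n}}) : typeD_signed_partition n k P ->
  exists f : 'I_k -> {set elt n}, [/\ good f, #|posn n :\: cov f| != 1 & P = blocks f].
Proof.
case/existsP => T /and3P [hT /eqP hP h3].
case/andP: hT => /andP [/andP [/andP [/andP [/forallP hd /forallP hne] /eqP hcov] hz] /eqP hs] /forallP h6.
pose f := fun i => T (enc (i, true)).
have hF : forall p, Fb f p = T (enc p).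
  move=> [i []] //=; rewrite /Fb /=; apply/esym/eqP; exact: (h6 i).
have hd' : forall p q, p != q -> [disjoint T (enc p) & T (enc q)].
  move=> p q pq; move/forallP: (hd (enc p)) => /(_ (enc q)) /implyP; apply.
  by apply: contra pq => /eqP /enc_inj ->.
have h0 : forall p, [disjoint T ord0 & T (enc p)].
  move=> p; move/forallP: (hd ord0) => /(_ (enc p)) /implyP; apply.
  by rewrite eq_sym enc_ord0.
have g : good f.
  split => [p|p q pq|p]; rewrite !hF; [exact: hne | exact: hd' |].
  by rewrite (disjointFr (h0 p) hz).
have hc : cov f = ~: T ord0.
  apply/setP => x; rewrite in_setC; apply/mem_cov/idP => [[p]|xT].
    by rewrite hF => xp; apply/negP => /(disjointFr (h0 p)); rewrite xp.
  have : x \in \bigcup_i T i by rewrite hcov inE.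
  case/bigcupP => j _; case: (ord_cases j) => [->|[p ->] xp]; first by rewrite (negPf xT).
  by exists p; rewrite hF.
exists f; split => //.
- by move: h3; rewrite -(setCK (T ord0)) -hc T0_card //; lia.
- rewrite hP /blocks hc setCK; apply/setP => X; apply/imsetP/setU1P.
  + case=> j _ ->; case: (ord_cases j) => [->|[p ->]]; first by left.
    by right; rewrite -hF mem_Pf.
  + case=> [->|/imsetP [p _ ->]]; first by exists ord0.
    by exists (enc p); rewrite ?hF.
Qed.


Definition pos n (m : nat) : elt n := inord (n + m).
Definition sgn {n} (X : {set elt n}) := pos n (minabs X) \in X.

Lemma absn_pos n m : m <= n -> absn (pos n m) = m.
Proof.
move=> h; rewrite absnE /pos inordK; first by rewrite leq_addr addKn.
by rewrite ltnS -addnn leq_add2l.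
Qed.

Lemma sgn_negS n (X : {set elt n}) : X != set0 -> [disjoint X & negS X] ->
  sgn (negS X) = ~~ sgn X.
Proof.
move=> hne hd; rewrite /sgn minabs_negS mem_negS.
have [x xX ex] := minabs_ex hne.
have nx : neg x \in X = false.
  by apply/negP => h; move: (disjointFr hd xX); rewrite mem_negS h.
have ep : absn x = absn (pos n (minabs X)) by rewrite absn_pos // -ex absn_le.
by case: (absn_eq ep) => ->; rewrite ?negK nx xX.
Qed.

Lemma sort_ord k (g : 'I_k -> nat) : injective g ->
  exists s : 'I_k -> 'I_k, injective s /\ forall i j : 'I_k, i < j -> g (s i) < g (s j).
Proof.
move=> ginj; pose r := fun a b : 'I_k => g a <= g b.
pose l := sort r (enum 'I_k).
have sz : size l = k by rewrite size_sort size_enum_ord.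
have ul : uniq l by rewrite sort_uniq enum_uniq.
have sl : sorted r l by apply: sort_sorted => a b; apply: leq_total.
clearbody l.
exists (fun i => nth i l i); split.
  move=> i j; rewrite (set_nth_default i j) ?sz // => e.
  apply: ord_inj; apply/eqP; rewrite -(nth_uniq i _ _ ul) ?sz //.
  by rewrite e.
move=> i j ij; rewrite (set_nth_default i j) ?sz //.
have le : r (nth i l i) (nth i l j).
  apply: (sorted_leq_nth (leT := r)) => //.
  - by move=> a b c; apply: leq_trans.
  - by move=> a; apply: leqnn.
  - by rewrite inE sz.
  - by rewrite inE sz.
  - exact: ltnW.
rewrite ltn_neqAle (le : g _ <= g _) andbT; apply/negP => /eqP /ginj /eqP.
rewrite nth_uniq ?sz // => /eqP e.
by rewrite e ltnn in ij.
Qed.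


Lemma negS_Fb n k (f : 'I_k -> {set elt n}) i b : negS (Fb f (i, b)) = Fb f (i, ~~ b).
Proof. by case: b; rewrite /Fb /= ?negSK. Qed.

Lemma minabs_Fb n k (f : 'I_k -> {set elt n}) p : minabs (Fb f p) = minabs (f p.1).
Proof. by case: p => i []; rewrite /Fb /= ?minabs_negS. Qed.

Lemma good_reindex n k (f0 f : 'I_k -> {set elt n}) (tau : 'I_k * bool -> 'I_k * bool) :
  good f0 -> injective tau -> (forall p, Fb f p = Fb f0 (tau p)) -> good f /\ Pf f = Pf f0.
Proof.
move=> [hne hd hz] ti hF; split.
  split=> [p|p q pq|p]; rewrite ?hF //; apply: hd.
  by apply: contra pq => /eqP /ti ->.
apply/setP => X; apply/imsetP/imsetP => [[p _ ->]|[q _ ->]].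
  by exists (tau p); rewrite ?hF.
have /codomP [p ->] := inj_card_onto ti (leqnn _) q.
by exists p; rewrite ?hF.
Qed.

Lemma adjust n k (f0 : 'I_k -> {set elt n}) (sg : 'I_k -> 'I_k) : good f0 -> injective sg ->
  (forall i j : 'I_k, i < j -> minabs (f0 (sg i)) < minabs (f0 (sg j))) ->
  forall s : {ffun 'I_k -> bool}, exists f : {ffun 'I_k -> {set elt n}},
    [/\ good f, sortedm f, Pf f = Pf f0 & forall i, sgn (f i) = s i].
Proof.
move=> g0 si hm s.
pose c := fun i => sgn (f0 (sg i)) == s i.
pose f := [ffun i => Fb f0 (sg i, c i)].
pose tau := fun p : 'I_k * bool => (sg p.1, if p.2 then c p.1 else ~~ c p.1).
have hF : forall p, Fb f p = Fb f0 (tau p).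
  by move=> [i []]; rewrite /Fb /tau /= ffunE // -/(Fb f0 (sg i, c i)) negS_Fb.
have ti : injective tau.
  move=> [i b] [j b'] [/si eij]; subst j; case: b; case: b' => //=; case: (c i) => //.
have [g hP] := good_reindex g0 ti hF.
exists f; split => //.
- move=> i j; rewrite leq_eqVlt => /orP [/eqP /ord_inj -> //|ij].
  by rewrite !ffunE !minabs_Fb /=; apply: ltnW; apply: hm.
- move=> i; rewrite ffunE /c; case: (eqVneq (sgn (f0 (sg i))) (s i)) => [e|ne] /=.
    by rewrite /Fb /= e.
  have [hne hd _] := g0.
  rewrite /Fb /= sgn_negS; first by move: ne; case: (s i); case: (sgn _).
    exact: (hne (sg i, true)).
  by apply: (hd (sg i, true) (sg i, false)); rewrite xpair_eqE andbF.
Qed.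


Lemma strict_rev k (b : 'I_k -> nat) : (forall i j : 'I_k, i < j -> b i < b j) ->
  forall i j, b j < b i -> j < i.
Proof.
move=> hb i j; apply: contraTT; rewrite -leqNgt leq_eqVlt => /orP [/eqP /ord_inj ->|/hb h].
  by rewrite ltnn.
by rewrite -leqNgt ltnW.
Qed.

Lemma mono_key k (a b : 'I_k -> nat) :
  (forall i j : 'I_k, i < j -> a i < a j) -> (forall i j : 'I_k, i < j -> b i < b j) ->
  (forall i : 'I_k, exists j, a i = b j) ->
  forall i : 'I_k, (forall j : 'I_k, j < i -> a j = b j) -> b i <= a i.
Proof.
move=> ha hb hab i IH; rewrite leqNgt; apply/negP => lt.
have [j ej] := hab i.
have ji : j < i by apply: strict_rev hb _ _ _; rewrite -ej.
have := IH j ji; rewrite -ej => e.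
by move: (ha _ _ ji); rewrite e ltnn.
Qed.

Lemma mono_uniq k (a b : 'I_k -> nat) :
  (forall i j : 'I_k, i < j -> a i < a j) -> (forall i j : 'I_k, i < j -> b i < b j) ->
  (forall i : 'I_k, exists j, a i = b j) -> (forall i : 'I_k, exists j, b i = a j) ->
  forall i : 'I_k, a i = b i.
Proof.
move=> ha hb hab hba.
suff H : forall m (i : 'I_k), (i : nat) = m -> a i = b i by move=> i; exact: H.
elim/ltn_ind => m IH i ei.
have IH1 : forall j : 'I_k, j < i -> a j = b j by move=> j ji; apply: (IH j) => //; rewrite -ei.
apply/eqP; rewrite eqn_leq (mono_key hb ha hba) ?(mono_key ha hb hab) //.
by move=> j /IH1 ->.
Qed.

Lemma uniq_sorted n k (f g : 'I_k -> {set elt n}) : good f -> good g ->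
  sortedm f -> sortedm g -> Pf f = Pf g -> (forall i, sgn (f i) = sgn (g i)) ->
  forall i, f i = g i.
Proof.
move=> gf gg sf sg ePf es.
have hm := mono_uniq (sorted_strict gf sf) (sorted_strict gg sg).
have ex : forall (f g : 'I_k -> {set elt n}) i, Pf f = Pf g ->
    exists q, f i = Fb g q.
  move=> f1 g1 i e; have : Fb f1 (i, true) \in Pf g1 by rewrite -e mem_Pf.
  by case/imsetP => q _ eq; exists q.
have em : forall i, minabs (f i) = minabs (g i).
  apply: hm => i.
  - by have [q ->] := ex f g i ePf; exists q.1; rewrite minabs_Fb.
  - by have [q ->] := ex g f i (esym ePf); exists q.1; rewrite minabs_Fb.
move=> i; have [[j b] e] := ex g f i (esym ePf).
have ji : j = i.
  by apply: (minabs_inj gf); rewrite -(minabs_Fb f (j, b)) -e em.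
subst j; move: e; case: b => //= e.
have [hne hd _] := gf.
move: (es i); rewrite e /Fb /= sgn_negS.
- by case: (sgn (f i)).
- exact: (hne (i, true)).
- by apply: (hd (i, true) (i, false)); rewrite xpair_eqE andbF.
Qed.

Lemma Pf_blocks n k (f : 'I_k -> {set elt n}) : good f ->
  Pf f = [set X in blocks f | zero n \notin X].
Proof.
move=> g; have [_ _ hz] := g; apply/setP => X; rewrite inE /blocks in_setU1.
apply/idP/andP => [h|[hb hzX]].
  by split; [rewrite h orbT | case/imsetP: h => p _ ->; apply: hz].
move: hb => /orP [/eqP eX|//]; rewrite eX in hzX.
by rewrite in_setC negbK (negPf (good_zero g)) in hzX.
Qed.


Unset Implicit Arguments.

Theorem lemma3p1 (n k : nat) : k <= n -> 2 ^ k * S_D n k = #|D_sub n k|.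
Proof.
move=> _.
pose Psi := fun f : {ffun 'I_k -> {set elt n}} => (blocks f, [ffun i => sgn (f i)] : {ffun 'I_k -> bool}).
have inj : {in D_sub n k &, injective Psi}.
  move=> f g /D_subP [gf sf _] /D_subP [gg sg _] [eb es].
  apply/ffunP => i; apply: (uniq_sorted gf gg sf sg).
  - by rewrite (Pf_blocks gf) (Pf_blocks gg) eb.
  - by move=> j; move/ffunP: es => /(_ j); rewrite !ffunE.
rewrite -(card_in_imset inj).
have -> : Psi @: D_sub n k =
    setX [set P | typeD_signed_partition n k P] [set: {ffun 'I_k -> bool}].
  apply/setP => [[P s]]; rewrite !inE andbT; apply/imsetP/idP.
  - by case=> f /D_subP [g _ hc] [-> _]; exact: SD_blocks.
  - case/SD_inv => f0 [g0 hc eP]; rewrite /= in eP; subst P.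
    have [sg [si hm]] := sort_ord (fun i j e => minabs_inj g0 e).
    have [f [g sf hP hs]] := adjust g0 si hm s.
    exists f.
      by apply/D_subP; split => //; rewrite /cov hP.
    rewrite /Psi /blocks /cov hP; congr pair; apply/ffunP => i; rewrite ffunE hs.
    by [].
by rewrite cardsX cardsT card_ffun card_bool card_ord /S_D mulnC.
Qed.
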